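(* Let $X$ be a finite set, $R>1$, $p\in(0,1]$, and let $\mathbf{A}\sim\pi$ be an $R$-spread random subset of $X$. Then there exists a coupling $\mathbb{P}_p$ of $\mathbf{A}\sim\pi$, $\mathbf{A}'\sim\pi$ and $\mathbf{V}\sim\mathbb{Q}_p$ (random subsets of $X$) under which $\mathbf{A}$ and $\mathbf{V}$ are independent and \[ \mathbb{E}_{\mathbb{P}_p}\bigg[\frac{|\mathbf{A}'\setminus\mathbf{V}|}{|\mathbf{A}|}\,\mathbf{1}\{\mathbf{A}\neq\emptyset\}\bigg]\le \frac{7}{(pR)^{1/3}}. \] Moreover, the marginal law of $\mathbf{A}'$ is the same as that of $\mathbf{A}$, and therefore $\mathbf{A}'$ is also $R$-spread.
   Context: For $R>1$, a random subset $\mathbf{A}\sim\pi$ of $X$ is called $R$-spread if for every fixed $S\subseteq X$, $\pi(S\subseteq \mathbf{A})\le R^{-|S|}$. For $p\in[0,1]$, $\mathbb{Q}_p$ denotes the law of the $p$-biased random subset of $X$, which includes each element of $X$ independently with probability $p$. The expression $\frac{|\mathbf{A}'\setminus\mathbf{V}|}{|\mathbf{A}|}\mathbf{1}\{\mathbf{A}\ne\emptyset\}$ is interpreted as $0$ when $\mathbf{A}=\emptyset$. *)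

(* Defs.v *)
From HB Require Import structures.
From mathcomp Require Import all_boot all_order all_algebra.
From mathcomp Require Import all_classical all_reals all_analysis.
Set Implicit Arguments. Unset Strict Implicit. Unset Printing Implicit Defensive.
Import Order.TTheory GRing.Theory Num.Theory.
Local Open Scope ring_scope.

Definition is_distr (R : realType) (T : finType) (mu : {ffun T -> R}) : Prop :=
  (forall t, 0 <= mu t) /\ \sum_t mu t = 1.

Definition spread (R : realType) (X : finType) (Rs : R)
    (pi : {ffun {set X} -> R}) : Prop :=
  forall S : {set X}, \sum_(A : {set X} | S \subset A) pi A <= Rs ^- #|S|.

Definition Qp (R : realType) (X : finType) (p : R) : {ffun {set X} -> R} :=
  [ffun V : {set X} => p ^+ #|V| * (1 - p) ^+ #|~: V|].

(* Triples (A, A', V) of subsets of X. *)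
Definition triple (X : finType) := ({set X} * {set X} * {set X})%type.

Definition margA (R : realType) (X : finType) (P : {ffun triple X -> R})
  : {ffun {set X} -> R} := [ffun a => \sum_(t : triple X | t.1.1 == a) P t].
Definition margA' (R : realType) (X : finType) (P : {ffun triple X -> R})
  : {ffun {set X} -> R} := [ffun a => \sum_(t : triple X | t.1.2 == a) P t].
Definition margV (R : realType) (X : finType) (P : {ffun triple X -> R})
  : {ffun {set X} -> R} := [ffun v => \sum_(t : triple X | t.2 == v) P t].

Definition jointAV (R : realType) (X : finType) (P : {ffun triple X -> R})
  (a v : {set X}) : R := \sum_(t : triple X | (t.1.1 == a) && (t.2 == v)) P t.

Definition loss_ratio (R : realType) (X : finType) (t : triple X) : R :=
  if t.1.1 == (finset.set0 : {set X}) then 0 else (#|t.1.2 :\: t.2|)%:R / (#|t.1.1|)%:R.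

Definition expect (R : realType) (X : finType) (P : {ffun triple X -> R})
  (f : triple X -> R) : R := \sum_t P t * f t.

(* Main.v *)
Require Import Defs.
From HB Require Import structures.
From mathcomp Require Import all_boot all_order all_algebra.
From mathcomp Require Import all_classical all_reals all_analysis.
From mathcomp Require Import ring lra.
Import Order.TTheory GRing.Theory Num.Theory.
Local Open Scope ring_scope.
Set Implicit Arguments. Unset Strict Implicit. Unset Printing Implicit Defensive.
Lemma sum_subsets (R : realType) (T : finType) (a : {set T}) (f : nat -> R) :
  \sum_(S : {set T} | S \subset a) f #|S| = \sum_(j < #|a|.+1) 'C(#|a|, j)%:R * f j.
Proof.
rewrite (partition_big (fun S : {set T} => inord #|S| : 'I_#|a|.+1) xpredT) //=.
apply: eq_bigr => j _.
transitivity (\sum_(S in [set S : {set T} | S \subset a & #|S| == j]) f j).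
  apply: eq_big => S; last first.
    by move=> /andP[Sa /eqP <-]; rewrite inordK // ltnS subset_leq_card.
  rewrite inE; case Sa: (S \subset a) => //=.
  by rewrite -val_eqE /= inordK // ltnS subset_leq_card.
by rewrite sumr_const cards_draws mulr_natl.
Qed.
Lemma sum_subsets_binom (R : realType) (T : finType) (a : {set T}) (x y : R) :
  \sum_(S : {set T} | S \subset a) x ^+ #|S| * y ^+ #|a :\: S| = (x + y) ^+ #|a|.
Proof.
transitivity (\sum_(S : {set T} | S \subset a)
   (fun j => x ^+ j * y ^+ (#|a| - j)) #|S|).
  apply: eq_bigr => S Sa /=.
  by rewrite cardsD (finset.setIidPr Sa).
rewrite (@sum_subsets R T a (fun j => x ^+ j * y ^+ (#|a| - j))) addrC exprDn; apply: eq_bigr => j _.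
by rewrite mulr_natl [x ^+ _ * _]mulrC.
Qed.

Lemma Qp_sum (R : realType) (X : finType) (p : R) : \sum_(v : {set X}) Qp X p v = 1.
Proof.
transitivity (\sum_(v : {set X} | v \subset (finset.setT : {set X})) p ^+ #|v| * (1 - p) ^+ #|(finset.setT : {set X}) :\: v|).
  apply: eq_big => v; first by rewrite finset.subsetT.
  by move=> _; rewrite ffunE finset.setTD.
by rewrite sum_subsets_binom addrC subrK expr1n.
Qed.

Lemma card_disjU (T : finType) (A B : {set T}) :
  A :&: B = finset.set0 -> #|A :|: B| = #|A| + #|B|.
Proof. by move=> h; rewrite cardsU h cards0 subn0. Qed.

Ltac bcase := repeat match goal with
  | |- context[?x \in ?A] => case: (x \in A)
  end; move=> /= *;
  repeat match goal with H : is_true true -> is_true false |- _ =>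
    by move: (H isT) end;
  rewrite /= ?andbT ?andbF ?orbT ?orbF //.

Lemma fiber (R : realType) (X : finType) (p : R) (a y : {set X}) : 0 < p ->
  \sum_(v | a :|: v == y) Qp X p v =
  if a \subset y then Qp X p y / p ^+ #|a| else 0.
Proof.
move=> p0.
case: ifP => ay; last first.
  rewrite big_pred0 // => v; apply/negbTE/eqP => E.
  by move: ay; rewrite -E finset.subsetUl.
rewrite (reindex_onto (fun u => (y :\: a) :|: u) (fun v => v :&: a)) /=; last first.
  move=> v /eqP <-; apply/setP => x; rewrite !inE; bcase.
transitivity (\sum_(u : {set X} | u \subset a) Qp X p (y :\: a :|: u)).
  apply: eq_bigl => u; apply/andP/idP.
    by case=> _ /eqP <-; apply: finset.subsetIr.
  move=> ua; split; apply/eqP/setP => x; rewrite !inE;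
    move: (fintype.subsetP ua x) (fintype.subsetP ay x); bcase.
transitivity (\sum_(u : {set X} | u \subset a)
   (p ^+ #|y :\: a| * (1 - p) ^+ #|~: y|) * (p ^+ #|u| * (1 - p) ^+ #|a :\: u|)).
  apply: eq_bigr => u ua; rewrite ffunE.
  rewrite card_disjU; last first.
    apply/setP => x; rewrite !inE; move: (fintype.subsetP ua x); bcase.
  have -> : ~: (y :\: a :|: u) = ~: y :|: (a :\: u).
    apply/setP => x; rewrite !inE; move: (fintype.subsetP ua x) (fintype.subsetP ay x); bcase.
  rewrite card_disjU; last first.
    apply/setP => x; rewrite !inE; move: (fintype.subsetP ay x); bcase.
  by rewrite !exprD; ring.
rewrite -mulr_sumr sum_subsets_binom (_ : p + (1 - p) = 1); last by ring.
rewrite expr1n mulr1 ffunE.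
have -> : #|y| = #|y :\: a| + #|a|.
  by rewrite -(cardsID a y) (finset.setIidPr ay) addnC.
rewrite exprD; field.
by rewrite expf_neq0 // gt_eqF.
Qed.

Lemma Kswap (R : realType) (X : finType) (p : R) (a : {set X}) (F : {set X} -> R) :
  0 < p ->
  \sum_(v : {set X}) Qp X p v * F (a :|: v) =
  \sum_(y : {set X}) (if a \subset y then Qp X p y / p ^+ #|a| else 0) * F y.
Proof.
move=> p0.
rewrite (partition_big (fun v => a :|: v) xpredT) //=.
apply: eq_bigr => y _.
rewrite -(fiber a y p0) mulr_suml.
by apply: eq_bigr => v /eqP ->.
Qed.

Lemma QT (R : realType) (X : finType) (p : R) (T : {set X}) : 0 < p ->
  \sum_(y : {set X} | T \subset y) Qp X p y = p ^+ #|T|.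
Proof.
move=> p0; have := Kswap T (fun _ => 1) p0.
rewrite (eq_bigr (fun v : {set X} => Qp X p v)); last by move=> v _; rewrite mulr1.
rewrite Qp_sum.
rewrite (eq_bigr (fun y : {set X} => if T \subset y then Qp X p y / p ^+ #|T| else 0));
  last by move=> y _; rewrite mulr1.
rewrite -big_mkcond /= -mulr_suml => h.
have pn0 : p ^+ #|T| != 0 by rewrite expf_neq0 // gt_eqF.
by rewrite -[RHS]mul1r h divfK.
Qed.

Definition wt (R : realType) (X : finType) (pi : {ffun {set X} -> R}) (p : R)
  (b : {set X}) : R := pi b / p ^+ #|b|.
Definition Lf (R : realType) (X : finType) (pi : {ffun {set X} -> R}) (p : R)
  (y : {set X}) : R := \sum_(b : {set X} | b \subset y) wt pi p b.
Definition muf (R : realType) (X : finType) (pi : {ffun {set X} -> R}) (p : R)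
  (y b : {set X}) : R := if b \subset y then wt pi p b / Lf pi p y else 0.
Definition Pc (R : realType) (X : finType) (pi : {ffun {set X} -> R}) (p : R)
  : {ffun triple X -> R} :=
  [ffun t => pi t.1.1 * Qp X p t.2 * muf pi p (t.1.1 :|: t.2) t.1.2].

Lemma wt_ge0 (R : realType) (X : finType) (pi : {ffun {set X} -> R}) (p : R) (b : {set X}) :
  is_distr pi -> 0 < p -> 0 <= wt pi p b.
Proof. by move=> [h _] p0; rewrite /wt divr_ge0 // exprn_ge0 // ltW. Qed.

Lemma Lf_ge_wt (R : realType) (X : finType) (pi : {ffun {set X} -> R}) (p : R) (b y : {set X}) :
  is_distr pi -> 0 < p -> b \subset y -> wt pi p b <= Lf pi p y.
Proof.
move=> d p0 by_; rewrite /Lf (bigD1 b) //= lerDl.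
by apply: sumr_ge0 => c _; apply: wt_ge0.
Qed.

Lemma Lf_ge0 (R : realType) (X : finType) (pi : {ffun {set X} -> R}) (p : R) (y : {set X}) :
  is_distr pi -> 0 < p -> 0 <= Lf pi p y.
Proof. by move=> d p0; apply: sumr_ge0 => c _; apply: wt_ge0. Qed.

Lemma mu_ge0 (R : realType) (X : finType) (pi : {ffun {set X} -> R}) (p : R) (y b : {set X}) :
  is_distr pi -> 0 < p -> 0 <= muf pi p y b.
Proof.
move=> d p0; rewrite /muf; case: ifP => // _.
by rewrite divr_ge0 ?wt_ge0 ?Lf_ge0.
Qed.

Lemma sum_mu (R : realType) (X : finType) (pi : {ffun {set X} -> R}) (p : R) (y : {set X}) :
  \sum_(b : {set X}) muf pi p y b = if Lf pi p y == 0 then 0 else 1.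
Proof.
rewrite /muf -big_mkcond /= -mulr_suml -/(Lf pi p y).
have [->|h] := eqVneq (Lf pi p y) 0; first by rewrite mul0r ?eqxx.
by rewrite divff // (negbTE h).
Qed.

Lemma sum_mu_le1 (R : realType) (X : finType) (pi : {ffun {set X} -> R}) (p : R) (y : {set X}) :
  \sum_(b : {set X}) muf pi p y b <= 1.
Proof. by rewrite sum_mu; case: ifP. Qed.

Lemma pi_mu (R : realType) (X : finType) (pi : {ffun {set X} -> R}) (p : R) (a v : {set X}) :
  is_distr pi -> 0 < p -> pi a * \sum_(b : {set X}) muf pi p (a :|: v) b = pi a.
Proof.
move=> d p0; have [/eqP -> | pa] := boolP (pi a == 0); first by rewrite mul0r.
rewrite sum_mu; case: eqP => [h|_]; last by rewrite mulr1.
have : 0 < wt pi p a.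
  rewrite /wt divr_gt0 // ?exprn_gt0 //.
  by rewrite lt_neqAle eq_sym pa (d.1 a).
have := Lf_ge_wt d p0 (finset.subsetUl a v); rewrite h => h1 h2.
by move: (le_lt_trans h1 h2); rewrite ltxx.
Qed.

Lemma sum_t1 (R : realType) (X : finType) (F : triple X -> R) (a : {set X}) :
  \sum_(t : triple X | t.1.1 == a) F t =
  \sum_(a' : {set X}) \sum_(v : {set X}) F ((a, a'), v).
Proof.
rewrite (reindex_onto (fun q : {set X} * {set X} => ((a, q.1), q.2))
   (fun t : triple X => (t.1.2, t.2))) /=; last by case=> [[a0 a1] v] /= /eqP ->.
rewrite (eq_bigl (fun _ => true)); last by case=> a' v /=; rewrite !eqxx.
by rewrite pair_bigA.
Qed.

Lemma sum_t2 (R : realType) (X : finType) (F : triple X -> R) (a' : {set X}) :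
  \sum_(t : triple X | t.1.2 == a') F t =
  \sum_(a : {set X}) \sum_(v : {set X}) F ((a, a'), v).
Proof.
rewrite (reindex_onto (fun q : {set X} * {set X} => ((q.1, a'), q.2))
   (fun t : triple X => (t.1.1, t.2))) /=; last by case=> [[a0 a1] v] /= /eqP ->.
rewrite (eq_bigl (fun _ => true)); last by case=> a v /=; rewrite !eqxx.
by rewrite pair_bigA.
Qed.

Lemma sum_t3 (R : realType) (X : finType) (F : triple X -> R) (v : {set X}) :
  \sum_(t : triple X | t.2 == v) F t =
  \sum_(a : {set X}) \sum_(a' : {set X}) F ((a, a'), v).
Proof.
rewrite (reindex_onto (fun q : {set X} * {set X} => ((q.1, q.2), v))
   (fun t : triple X => (t.1.1, t.1.2))) /=; last by case=> [[a0 a1] v0] /= /eqP ->.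
rewrite (eq_bigl (fun _ => true)); last by case=> a a' /=; rewrite !eqxx.
by rewrite pair_bigA.
Qed.

Lemma sum_t13 (R : realType) (X : finType) (F : triple X -> R) (a v : {set X}) :
  \sum_(t : triple X | (t.1.1 == a) && (t.2 == v)) F t =
  \sum_(a' : {set X}) F ((a, a'), v).
Proof.
rewrite (reindex_onto (fun q : {set X} => ((a, q), v))
   (fun t : triple X => t.1.2)) /=; last by case=> [[a0 a1] v0] /= /andP[/eqP -> /eqP ->].
by rewrite (eq_bigl (fun _ => true)) // => a' /=; rewrite !eqxx.
Qed.

Lemma sum_tall (R : realType) (X : finType) (F : triple X -> R) :
  \sum_(t : triple X) F t =
  \sum_(a : {set X}) \sum_(a' : {set X}) \sum_(v : {set X}) F ((a, a'), v).
Proof.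
transitivity (\sum_(t : triple X) F (t.1, t.2)).
  by apply: eq_bigr => [[q v]].
rewrite -(pair_bigA _ (fun q v => F (q, v))) /=.
transitivity (\sum_(q : {set X} * {set X}) \sum_(v : {set X}) F ((q.1, q.2), v)).
  by apply: eq_bigr => [[a a']].
by rewrite -(pair_bigA _ (fun a a' => \sum_(v : {set X}) F ((a, a'), v))).
Qed.

Lemma inner_Pc (R : realType) (X : finType) (pi : {ffun {set X} -> R}) (p : R)
  (a v : {set X}) : is_distr pi -> 0 < p ->
  \sum_(a' : {set X}) Pc pi p ((a, a'), v) = pi a * Qp X p v.
Proof.
move=> d p0.
rewrite (eq_bigr (fun a' => pi a * Qp X p v * muf pi p (a :|: v) a'));
  last by move=> a' _; rewrite ffunE.
by rewrite -mulr_sumr mulrAC pi_mu.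
Qed.

Lemma mu_L (R : realType) (X : finType) (pi : {ffun {set X} -> R}) (p : R)
  (y b : {set X}) : is_distr pi -> 0 < p ->
  muf pi p y b * Lf pi p y = if b \subset y then wt pi p b else 0.
Proof.
move=> d p0; rewrite /muf; case: ifP => by_; last by rewrite mul0r.
have [h|h] := eqVneq (Lf pi p y) 0; last by rewrite divfK.
rewrite h mulr0; apply/esym/le_anti; rewrite wt_ge0 // andbT.
by rewrite -h Lf_ge_wt.
Qed.

Lemma margs_Pc (R : realType) (X : finType) (pi : {ffun {set X} -> R}) (p : R) :
  p <= 1 ->
  is_distr pi -> 0 < p ->
  [/\ is_distr (Pc pi p), margA (Pc pi p) = pi, margA' (Pc pi p) = pi,
      margV (Pc pi p) = Qp X p &
      (forall a v : {set X}, jointAV (Pc pi p) a v = pi a * Qp X p v)].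
Proof.
move=> p1 d p0.
have Qge0 : forall v, 0 <= Qp X p v.
  by move=> v; rewrite ffunE mulr_ge0 // exprn_ge0 // ?subr_ge0 // ltW.
split.
- split.
    move=> [[a a'] v]; rewrite ffunE /= mulr_ge0 ?mu_ge0 //.
    by rewrite mulr_ge0 ?(d.1 a).
  rewrite sum_tall -d.2; apply: eq_bigr => a _.
  rewrite exchange_big /=.
  under eq_bigr do rewrite inner_Pc //.
  by rewrite -mulr_sumr Qp_sum mulr1.
- apply/ffunP => a; rewrite ffunE sum_t1 exchange_big /=.
  under eq_bigr do rewrite inner_Pc //.
  by rewrite -mulr_sumr Qp_sum mulr1.
- apply/ffunP => a'; rewrite ffunE sum_t2.
  transitivity (\sum_(a : {set X}) pi a * \sum_(v : {set X}) Qp X p v * muf pi p (a :|: v) a').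
    apply: eq_bigr => a _; rewrite mulr_sumr; apply: eq_bigr => v _.
    by rewrite ffunE /= mulrA.
  under eq_bigr => a _ do rewrite (Kswap a (fun y => muf pi p y a') p0) mulr_sumr.
  rewrite exchange_big /=.
  transitivity (\sum_(y : {set X}) Qp X p y * (muf pi p y a' * Lf pi p y)).
    apply: eq_bigr => y _.
    rewrite /Lf [in RHS]big_mkcond /= !mulr_sumr; apply: eq_bigr => a _.
    case: (a \subset y); last by rewrite !(mul0r, mulr0).
    by rewrite /wt; ring.
  under eq_bigr do rewrite mu_L //.
  transitivity (\sum_(y : {set X} | a' \subset y) Qp X p y * wt pi p a').
    by rewrite [RHS]big_mkcond; apply: eq_bigr => y _; case: ifP => _; rewrite ?mulr0.
  rewrite -mulr_suml QT // /wt mulrC divfK //.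
  by rewrite expf_neq0 // gt_eqF.
- apply/ffunP => v; rewrite ffunE sum_t3.
  under eq_bigr do rewrite inner_Pc //.
  by rewrite -mulr_suml d.2 mul1r.
- by move=> a v; rewrite /jointAV sum_t13 inner_Pc.
Qed.
Lemma geom (R : realType) (r : R) n : 0 <= r -> r <= 2^-1 ->
  \sum_(i < n) r ^+ i.+1 <= 2 * r - 2 * r ^+ n.+1.
Proof.
move=> r0 r1; elim: n => [|n IH]; first by rewrite big_ord0 expr1 subrr.
rewrite big_ord_recr /=.
have h : 2 * r ^+ n.+2 <= r ^+ n.+1.
  rewrite exprS mulrA -[X in _ <= X]mul1r ler_wpM2r ?exprn_ge0 //.
  by rewrite -(@ler_pdivlMl _ 2) // ?mulr1 //; lra.
lra.
Qed.

Lemma expR1_le4 (R : realType) : expR (1 : R) <= 4.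
Proof.
have h : 2^-1 <= expR (- 2^-1 : R).
  have := expR_ge1Dx (- 2^-1 : R); lra.
have h2 : expR (2^-1 : R) <= 2.
  have e : expR (2^-1 : R) * expR (- 2^-1) = 1.
    by rewrite -expRD subrr expR0.
  have p0 : 0 < expR (2^-1 : R) := expR_gt0 _.
  nra.
have -> : (1 : R) = 2^-1 + 2^-1 by field.
rewrite expRD.
have p0 : 0 <= expR (2^-1 : R) := expR_ge0 _.
nra.
Qed.

Lemma ffact_le_exp n m : (n ^_ m <= n ^ m)%N.
Proof.
elim: m n => [|m IH] n; first by [].
rewrite ffactnS expnS leq_mul //.
apply: (leq_trans (IH _)); case: m {IH} => [|m] //; by rewrite leq_exp2r // leq_pred.
Qed.

Lemma jj_fact (R : realType) j : (j%:R : R) ^+ j / j`!%:R <= 4 ^+ j.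
Proof.
case: j => [|n]; first by rewrite expr0 fact0 divr1.
have := @expR_ge1Dxn R n.+1%:R n (ler0n _ _).
rewrite -[X in expR X]mulr1 expRM_natl => h.
apply: (le_trans _ (lerXn2r _ _ _ (expR1_le4 R))); rewrite ?inE ?expR_ge0 //.
apply: (le_trans _ h); rewrite lerDr //.
by rewrite nnegrE expR_ge0.
by rewrite nnegrE.
Qed.

Lemma binom_term (R : realType) (k j : nat) (th lam : R) : 0 < th -> 0 < lam ->
  th * k%:R < j%:R -> 'C(k, j)%:R / lam ^+ j <= (4 / (th * lam)) ^+ j.
Proof.
move=> t0 l0 hk.
have F0 : 0 < (j`!%:R : R) by rewrite ltr0n fact_gt0.
have T0 : 0 < th ^+ j by rewrite exprn_gt0.
have L0 : 0 < lam ^+ j by rewrite exprn_gt0.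
have hC : 'C(k, j)%:R * j`!%:R <= (k%:R : R) ^+ j.
  rewrite -natrM -natrX ler_nat bin_ffact. exact: ffact_le_exp.
have hth : (th * k%:R) ^+ j <= (j%:R : R) ^+ j.
  apply: lerXn2r; rewrite ?nnegrE ?mulr_ge0 ?ler0n ?(ltW t0) //; exact: ltW.
have hj := jj_fact R j.
have key : 'C(k, j)%:R * th ^+ j <= (4 : R) ^+ j.
  apply: le_trans hj.
  rewrite ler_pdivlMr // mulrAC.
  apply: le_trans (ler_wpM2r (ltW T0) hC) _.
  by rewrite mulrC -exprMn.
rewrite expr_div_n exprMn.
have -> : 'C(k, j)%:R / lam ^+ j = ('C(k, j)%:R * th ^+ j) / (th ^+ j * lam ^+ j).
  by field; rewrite !gt_eqF.
by rewrite ler_wpM2r // invr_ge0 mulr_ge0 // ltW.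
Qed.

Lemma SP (R : realType) (X : finType) (pi : {ffun {set X} -> R}) (p Rs th : R)
  (a : {set X}) : is_distr pi -> spread Rs pi -> 0 < p -> 0 < Rs -> 0 < th ->
  4 / (th * (p * Rs)) <= 2^-1 ->
  \sum_(b : {set X}) (if th * #|a|%:R < #|a :&: b|%:R then pi b / p ^+ #|a :&: b| else 0)
   <= 2 * (4 / (th * (p * Rs))).
Proof.
move=> d sp p0 R0 t0; set r := 4 / _ => r12.
have r0 : 0 <= r by rewrite /r divr_ge0 // ltW // mulr_gt0 // mulr_gt0.
have tnn : forall (S b : {set X}) (c : bool),
    0 <= (if c then (if S \subset b then pi b / p ^+ #|S| else 0) else 0).
  move=> S b c; case: c => //; case: ifP => // _.
  by rewrite divr_ge0 ?(d.1 b) // exprn_ge0 // ltW.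
apply: (@le_trans _ _ (\sum_(b : {set X}) \sum_(S : {set X} | S \subset a)
   (if th * #|a|%:R < #|S|%:R then (if S \subset b then pi b / p ^+ #|S| else 0) else 0))).
  apply: ler_sum => b _; case: ifP => h; last by apply: sumr_ge0 => S _.
  rewrite (bigD1 (a :&: b)) /=; last exact: finset.subsetIl.
  by rewrite h finset.subsetIr lerDl; apply: sumr_ge0 => S _.
rewrite exchange_big /=.
apply: (@le_trans _ _ (\sum_(S : {set X} | S \subset a)
   (fun j => if th * #|a|%:R < j%:R then (p * Rs)^-1 ^+ j else 0) #|S|)).
  apply: ler_sum => S _ /=; case: ifP => h; last by rewrite big1.
  rewrite -big_mkcond /= -mulr_suml.
  apply: le_trans (ler_wpM2r _ (sp S)) _; first by rewrite invr_ge0 exprn_ge0 // ltW.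
  by rewrite exprVn exprMn invfM mulrC.
rewrite (@sum_subsets R X a (fun j => if th * #|a|%:R < j%:R then (p * Rs)^-1 ^+ j else 0)).
apply: (@le_trans _ _ (\sum_(j < #|a|.+1) (if (0 < j)%N then r ^+ j else 0))).
  apply: ler_sum => j _; case: ifP => h; last first.
    by rewrite mulr0; case: ifP => _ //; rewrite exprn_ge0.
  have j0 : (0 < j)%N.
    rewrite -(ltr_nat R); apply: le_lt_trans h.
    by rewrite mulr_ge0 // ltW.
  rewrite j0 exprVn.
  by apply: binom_term => //; rewrite mulr_gt0.
rewrite big_ord_recl /= add0r.
rewrite (eq_bigr (fun i : 'I_#|a| => r ^+ i.+1)); last by move=> i _ /=; rewrite /bump /=.
apply: le_trans (geom _ r0 r12) _.
by rewrite lerBlDr lerDl mulr_ge0 // exprn_ge0.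
Qed.

Lemma cover (R : realType) (X : finType) (p : R) (a b : {set X}) : 0 < p ->
  \sum_(v : {set X}) Qp X p v * (if b \subset a :|: v then 1 else 0) =
  p ^+ #|a :|: b| / p ^+ #|a|.
Proof.
move=> p0.
rewrite (Kswap a (fun y => if b \subset y then 1 else 0) p0).
transitivity (\sum_(y : {set X} | a :|: b \subset y) Qp X p y / p ^+ #|a|).
  rewrite [RHS]big_mkcond; apply: eq_bigr => y _; rewrite finset.subUset.
  by case: (a \subset y); case: (b \subset y); rewrite /= ?mulr1 ?mulr0 ?mul0r.
by rewrite -mulr_suml QT.
Qed.

Lemma wt_cover (R : realType) (X : finType) (pi : {ffun {set X} -> R}) (p : R)
  (a b : {set X}) : 0 < p ->
  wt pi p b * (p ^+ #|a :|: b| / p ^+ #|a|) = pi b / p ^+ #|a :&: b|.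
Proof.
move=> p0.
have nz : forall n, p ^+ n != 0 by move=> n; rewrite expf_neq0 // gt_eqF.
have e : p ^+ #|a :|: b| = p ^+ #|a| * p ^+ #|b| / p ^+ #|a :&: b|.
  by rewrite -!exprD -cardsUI exprD mulfK.
rewrite e /wt; field.
by rewrite !nz.
Qed.

Lemma planted (R : realType) (X : finType) (pi : {ffun {set X} -> R}) (p : R)
  (G : {set X} -> R) : 0 < p ->
  \sum_(a : {set X}) \sum_(v : {set X}) pi a * Qp X p v * G (a :|: v) =
  \sum_(y : {set X}) Qp X p y * Lf pi p y * G y.
Proof.
move=> p0.
transitivity (\sum_(a : {set X}) pi a * \sum_(v : {set X}) Qp X p v * G (a :|: v)).
  by apply: eq_bigr => a _; rewrite mulr_sumr; apply: eq_bigr => v _; rewrite mulrA.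
under eq_bigr => a _ do rewrite (Kswap a G p0) mulr_sumr.
rewrite exchange_big /=; apply: eq_bigr => y _.
rewrite /Lf [in RHS]big_mkcond /= mulr_sumr mulr_suml; apply: eq_bigr => a _.
case: (a \subset y); last by rewrite !(mul0r, mulr0).
by rewrite /wt; ring.
Qed.

Lemma loss_le1 (R : realType) (X : finType) (a a' v : {set X}) :
  a' \subset a :|: v -> loss_ratio R ((a, a'), v) <= 1.
Proof.
move=> h; rewrite /loss_ratio /=; case: eqP => // /eqP an.
have k0 : 0 < (#|a|%:R : R) by rewrite ltr0n card_gt0.
rewrite ler_pdivrMr // mul1r ler_nat; apply: subset_leq_card.
apply/fintype.subsetP => x; rewrite !inE => /andP[xv xa'].
by move: (fintype.subsetP h x xa'); rewrite !inE (negbTE xv) orbF.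
Qed.

Lemma loss_le (R : realType) (X : finType) (a a' v : {set X}) (th : R) :
  0 <= th -> a' \subset a :|: v ->
  loss_ratio R ((a, a'), v) <=
    th + (if th * #|a|%:R < #|a :&: a'|%:R then 1 else 0).
Proof.
move=> t0 h; rewrite /loss_ratio /=; case: eqP => [_|/eqP an].
  by rewrite addr_ge0 //; case: ifP.
have k0 : 0 < (#|a|%:R : R) by rewrite ltr0n card_gt0.
have h1 : (#|a' :\: v| <= #|a :&: a'|)%N.
  apply: subset_leq_card; apply/fintype.subsetP => x; rewrite !inE => /andP[xv xa'].
  by move: (fintype.subsetP h x xa'); rewrite !inE (negbTE xv) orbF => ->.
have h2 : (#|a :&: a'| <= #|a|)%N by apply: subset_leq_card; apply: finset.subsetIl.
case: ifP => hc.
  apply: (@le_trans _ _ 1); last by rewrite lerDr.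
  by rewrite ler_pdivrMr // mul1r ler_nat (leq_trans h1 h2).
rewrite addr0 ler_pdivrMr //; apply: (@le_trans _ _ (#|a :&: a'|%:R)).
  by rewrite ler_nat.
by rewrite leNgt hc.
Qed.

Lemma PW1 (R : realType) (X : finType) (pi : {ffun {set X} -> R}) (p : R)
  (a v : {set X}) : is_distr pi -> 0 < p ->
  \sum_(a' : {set X}) muf pi p (a :|: v) a' * loss_ratio R ((a, a'), v) <= 1.
Proof.
move=> d p0; apply: le_trans (sum_mu_le1 pi p (a :|: v)).
apply: ler_sum => a' _; have [h|h] := boolP (a' \subset a :|: v).
  by apply: ler_piMr; [apply: mu_ge0 | apply: loss_le1].
have -> : muf pi p (a :|: v) a' = 0 by rewrite /muf (negbTE h).
by rewrite mul0r.
Qed.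

Definition Nf (R : realType) (X : finType) (pi : {ffun {set X} -> R}) (p th : R)
  (a y : {set X}) : R :=
  \sum_(b : {set X}) (if b \subset y then
     (if th * #|a|%:R < #|a :&: b|%:R then wt pi p b else 0) else 0).

Lemma PW2 (R : realType) (X : finType) (pi : {ffun {set X} -> R}) (p th de : R)
  (a v : {set X}) : is_distr pi -> 0 < p -> 0 <= th -> 0 < de ->
  \sum_(a' : {set X}) muf pi p (a :|: v) a' * loss_ratio R ((a, a'), v) <=
  th + (if Lf pi p (a :|: v) < de then 1 else 0) + de^-1 * Nf pi p th a (a :|: v).
Proof.
move=> d p0 t0 d0; set y := a :|: v.
set I := fun a' : {set X} => (if th * #|a|%:R < #|a :&: a'|%:R then 1 else 0 : R).
apply: (@le_trans _ _ (\sum_(a' : {set X}) (th * muf pi p y a' + muf pi p y a' * I a'))).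
  apply: ler_sum => a' _; have [h|h] := boolP (a' \subset y).
    rewrite [th * _]mulrC -mulrDr.
    by apply: ler_wpM2l; [apply: mu_ge0 | apply: loss_le].
  have -> : muf pi p y a' = 0 by rewrite /muf (negbTE h).
  by rewrite !(mul0r, mulr0) addr0.
rewrite big_split /= -mulr_sumr -addrA lerD //.
  by rewrite -[X in _ <= X]mulr1 ler_wpM2l // sum_mu_le1.
have Inn : forall a', 0 <= I a' by move=> a'; rewrite /I; case: ifP.
have I1 : forall a', I a' <= 1 by move=> a'; rewrite /I; case: ifP.
have Nnn : 0 <= de^-1 * Nf pi p th a y.
  apply: mulr_ge0; first by rewrite invr_ge0 ltW.
  rewrite /Nf; apply: sumr_ge0 => b _.
  by case: ifP => // _; case: ifP => // _; apply: wt_ge0.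
case: ifP => hL.
  apply: (@le_trans _ _ 1); last by rewrite lerDl.
  apply: le_trans (sum_mu_le1 pi p y); apply: ler_sum => a' _.
  by apply: ler_piMr; [apply: mu_ge0 | apply: I1].
rewrite add0r /Nf mulr_sumr; apply: ler_sum => b _.
rewrite /muf /I; case: ifP => hb; last by rewrite !(mul0r, mulr0).
have L0 : 0 < Lf pi p y by apply: lt_le_trans d0 _; rewrite leNgt hL.
case: ifP => _; last by rewrite !mulr0.
rewrite mulr1 mulrC ler_wpM2r ?wt_ge0 //.
by rewrite lef_pV2 ?posrE // leNgt hL.
Qed.

Lemma expect_le (R : realType) (X : finType) (pi : {ffun {set X} -> R}) (p : R)
  (B : {set X} -> {set X} -> R) : p <= 1 -> is_distr pi -> 0 < p ->
  (forall a v : {set X},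
    \sum_(a' : {set X}) muf pi p (a :|: v) a' * loss_ratio R ((a, a'), v) <= B a v) ->
  expect (Pc pi p) (@loss_ratio R X) <=
  \sum_(a : {set X}) \sum_(v : {set X}) pi a * Qp X p v * B a v.
Proof.
move=> p1 d p0 hB.
rewrite /expect sum_tall; apply: ler_sum => a _; rewrite exchange_big /=.
apply: ler_sum => v _.
rewrite (eq_bigr (fun a' => pi a * Qp X p v *
   (muf pi p (a :|: v) a' * loss_ratio R ((a, a'), v)))); last first.
  by move=> a' _; rewrite ffunE /= !mulrA.
rewrite -mulr_sumr ler_wpM2l //.
by rewrite mulr_ge0 ?(d.1 a) // ffunE mulr_ge0 // exprn_ge0 // ?subr_ge0 // ltW.
Qed.

Lemma N_sum (R : realType) (X : finType) (pi : {ffun {set X} -> R}) (p th : R)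
  (a : {set X}) : 0 < p ->
  \sum_(v : {set X}) Qp X p v * Nf pi p th a (a :|: v) =
  \sum_(b : {set X}) (if th * #|a|%:R < #|a :&: b|%:R then pi b / p ^+ #|a :&: b| else 0).
Proof.
move=> p0; rewrite /Nf.
under eq_bigr => v _ do rewrite mulr_sumr.
rewrite exchange_big /=; apply: eq_bigr => b _.
case: ifP => hc; last first.
  by rewrite big1 // => v _; case: ifP; rewrite mulr0.
rewrite -(@wt_cover R X pi p a b p0) -(@cover R X p a b p0) mulr_sumr.
apply: eq_bigr => v _; case: ifP; rewrite ?mulr0 ?mulr1 //.
by rewrite mulrC.
Qed.

Lemma sum_bound (R : realType) (X : finType) (pi : {ffun {set X} -> R}) (p Rs th de : R) :
  p <= 1 -> is_distr pi -> spread Rs pi -> 0 < p -> 0 < Rs -> 0 < th -> 0 < de ->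
  4 / (th * (p * Rs)) <= 2^-1 ->
  \sum_(a : {set X}) \sum_(v : {set X}) pi a * Qp X p v *
    (th + (if Lf pi p (a :|: v) < de then 1 else 0) + de^-1 * Nf pi p th a (a :|: v))
  <= th + de + de^-1 * (2 * (4 / (th * (p * Rs)))).
Proof.
move=> p1 d sp p0 R0 t0 d0 r12.
have Qge0 : forall v, 0 <= Qp X p v.
  by move=> v; rewrite ffunE mulr_ge0 // exprn_ge0 // ?subr_ge0 // ltW.
rewrite (eq_bigr (fun a => \sum_(v : {set X}) (pi a * Qp X p v * th +
   pi a * Qp X p v * (if Lf pi p (a :|: v) < de then 1 else 0) +
   pi a * Qp X p v * (de^-1 * Nf pi p th a (a :|: v))))); last first.
  by move=> a _; apply: eq_bigr => v _; rewrite !mulrDr.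
under eq_bigr => a _ do rewrite !big_split /=.
rewrite !big_split /=.
rewrite lerD // ?lerD //.
- rewrite le_eqVlt; apply/orP; left; apply/eqP.
  transitivity (\sum_(a : {set X}) pi a * th).
    apply: eq_bigr => a _; rewrite -mulr_suml -mulr_sumr Qp_sum mulr1 //.
  by rewrite -mulr_suml d.2 mul1r.
- rewrite (@planted R X pi p (fun y => if Lf pi p y < de then 1 else 0) p0).
  apply: (@le_trans _ _ (\sum_(y : {set X}) Qp X p y * de)).
    apply: ler_sum => y _; rewrite -mulrA ler_wpM2l //.
    by case: ifP => h; rewrite ?mulr1 ?mulr0 ?ltW.
  by rewrite -mulr_suml Qp_sum mul1r.
- apply: (@le_trans _ _ (\sum_(a : {set X}) pi a * (de^-1 * (2 * (4 / (th * (p * Rs))))))).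
    apply: ler_sum => a _.
    have -> : \sum_(v : {set X}) pi a * Qp X p v * (de^-1 * Nf pi p th a (a :|: v)) =
      pi a * de^-1 * \sum_(v : {set X}) Qp X p v * Nf pi p th a (a :|: v).
      by rewrite mulr_sumr; apply: eq_bigr => v _; ring.
    rewrite N_sum // -mulrA ler_wpM2l ?(d.1 a) // ler_wpM2l ?invr_ge0 ?(ltW d0) //.
    exact: SP.
  by rewrite -mulr_suml d.2 mul1r.
Qed.

Unset Implicit Arguments.
Theorem theorem2 (R : realType) (X : finType) (Rs p : R)
  (pi : {ffun {set X} -> R}) :
  1 < Rs -> 0 < p -> p <= 1 ->
  is_distr pi -> spread Rs pi ->
  exists P : {ffun triple X -> R},
    is_distr P /\
    margA P = pi /\ margA' P = pi /\ margV P = Qp X p /\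
    (forall a v : {set X}, jointAV P a v = pi a * Qp X p v) /\
    expect P (@loss_ratio R X) <= 7 / ((p * Rs) `^ (3%:R^-1)) /\
    spread Rs (margA' P).
Proof.
move=> R1 p0 p1 d sp.
have R0 : 0 < Rs by apply: lt_trans R1.
have [dP mA mA' mV jAV] := margs_Pc p1 d p0.
exists (Pc pi p); do 5 (split; first by []).
split; last by rewrite mA'.
have l0 : 0 < p * Rs by rewrite mulr_gt0.
set c := (p * Rs) `^ (3%:R^-1).
have c0 : 0 < c by apply: powR_gt0.
have c3 : c ^+ 3 = p * Rs.
  by rewrite /c -powR_mulrn ?ltW // -powRrM mulVf ?powRr1 ?ltW.
have [hc|hc] := leP c 7.
  apply: le_trans (@expect_le R X pi p (fun _ _ => 1) p1 d p0 (fun a v => PW1 a v d p0)) _ => /=.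
  have -> : \sum_(a : {set X}) \sum_(v : {set X}) pi a * Qp X p v * 1 = 1.
    transitivity (\sum_(a : {set X}) pi a); last exact: d.2.
    apply: eq_bigr => a _.
    rewrite (eq_bigr (fun v => pi a * Qp X p v)); last by move=> v _; rewrite mulr1.
    by rewrite -mulr_sumr Qp_sum mulr1.
  by rewrite ler_pdivlMr // mul1r.
have t0 : 0 < 2 / c by rewrite divr_gt0.
apply: le_trans (@expect_le R X pi p _ p1 d p0
   (fun a v => @PW2 R X pi p (2 / c) (2 / c) a v d p0 (ltW t0) t0)) _.
have r12 : 4 / (2 / c * (p * Rs)) <= 2^-1.
  rewrite -c3 (_ : 4 / (2 / c * c ^+ 3) = 2 / c ^+ 2); last by field; rewrite gt_eqF.
  rewrite ler_pdivrMr ?exprn_gt0 //; nra.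
apply: le_trans (sum_bound p1 d sp p0 R0 t0 t0 r12) _.
rewrite -c3.
have -> : 2 / c + 2 / c + (2 / c)^-1 * (2 * (4 / (2 / c * c ^+ 3))) = 6 / c.
  by field; rewrite gt_eqF.
by rewrite ler_pM2r ?invr_gt0 // ler_nat.
Qed.
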